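(* Let $n\geq 1$ and let $R_\bullet$, $\Omega(R_\bullet)$, $N_*$, $D_*$, $\omega_q$, $\alpha_q$, $\beta_q$, $(\omega_q)_i$, $(\omega_q)_{i,j}$ be as in the context. Then for every $q\geq 0$: if $n$ is odd, $\omega_q$ is a cycle in $N_q\Omega(R_\bullet)$ (i.e. $\omega_q\in N_q\Omega(R_\bullet)$ and $d_0\omega_q=0$); if $n$ is even, $\alpha_q$ and $\beta_q$ are cycles in $N_q\Omega(R_\bullet)$. Furthermore, for any $n$, the elements $(\omega_{q+1})_r$, $(\omega_{q+1})_{j,k}$ and $y_r(\omega_{q+1})_{j,k}$ lie in $D_{q+1}\Omega(R_\bullet)$ for all $1\leq j<k\leq q+1$ and $1\leq r\leq q+1$.
   Context: All algebras are over $\mathbb{F}_2$ and (graded) commutative. Fix integers $n\geq 1$ and $|x|\geq 1$. Let $R_\bullet$ be the simplicial graded $\mathbb{F}_2$-algebra with $R_q=\mathbb{F}_2[x,y_1,\dots,y_q]$ ($q\geq 0$), $|y_i|=(n+1)|x|$, whose face maps $d_i:R_q\to R_{q-1}$ and degeneracy maps $s_i:R_q\to R_{q+1}$ ($0\le i\le q$) are the algebra maps given by $s_i(x)=x$, $d_i(x)=x$, $s_i(y_j)=y_j$ if $i\geq j$ and $s_i(y_j)=y_{j+1}$ if $i<j$; and $d_i(y_j)=x^{n+1}$ if $i=0,j=1$; $d_i(y_j)=y_{j-1}$ if $i<j$, $j>1$; $d_i(y_j)=y_j$ if $i\geq j$, $j<q$; $d_q(y_q)=0$. For a graded commutative $\mathbb{F}_2$-algebra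 $A$, the de Rham complex $\Omega(A)$ is the free $A$-algebra on generators ${\bf d}a$ ($a\in A$), $|{\bf d}a|=|a|-1$, modulo ${\bf d}(a+b)={\bf d}a+{\bf d}b$, ${\bf d}(ab)=({\bf d}a)b+a{\bf d}b$, $({\bf d}a)^2=0$; it is functorial, so $\Omega(R_\bullet)$ is a simplicial algebra. For a simplicial $\mathbb{F}_2$-vector space $V$, $N_q(V)=\bigcap_{1\le i\le q}\ker(d_i)$ is the normalized complex with differential $d_0$, and $D_q(V)\subseteq V_q$ is the subspace spanned by degenerate elements (images of the $s_i$). In $\Omega(R_q)$ put $\omega_q={\bf d}y_1\cdots{\bf d}y_q$ for $q>0$, $\omega_0=1$; $(\omega_q)_i$ is $\omega_q$ with the factor ${\bf d}y_i$ omitted and $(\omega_q)_{i,j}$ ($i<j$) is $\omega_q$ with ${\bf d}y_i,{\bf d}y_j$ omitted; $\alpha_q={\bf d}x\,\omega_q$ and $\beta_q=x\omega_q+{\bf d}x\sum_{i=1}^q y_i(\omega_q)_i$ for $q>0$, $\alpha_0={\bf d}x$, $\beta_0=x$. *)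

(* Defs.v *)
From HB Require Import structures.
From mathcomp Require Import all_boot all_order all_algebra.
From mathcomp Require Import mpoly.

Unset Printing Implicit Defensive.
Import GRing.Theory.
Local Open Scope ring_scope.

(* Concrete model of Omega(R_q), R_q = F_2[x, y_1, ..., y_q].          *)
(* For a polynomial algebra, Omega(R_q) is the commutative algebra     *)
(* generated over R_q by dx, dy_1, ..., dy_q subject to (dz)^2 = 0.    *)
(* We model it by W q := F_2[x,y_1..y_q,dx,dy_1..dy_q] (mpolys in      *)
(* 2(q+1) variables) modulo the ideal generated by the squares of the  *)
(* d-variables.  Variable layout: lshift v (v : 'I_(q+1)) is the       *)
(* polynomial variable (v = 0 : x, v = j : y_j), and rshift v is its   *)
(* differential d(var v).                                              *)

Definition W (q : nat) := {mpoly 'F_2[q.+1 + q.+1]}.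

Definition pvar (q : nat) (v : 'I_q.+1) : W q := 'X_(lshift q.+1 v).
Definition dvar (q : nat) (v : 'I_q.+1) : W q := 'X_(rshift q.+1 v).

(* x, y_j, dx, dy_j in Omega(R_q) (j meant in 1..q) *)
Definition X (q : nat) : W q := pvar q ord0.
Definition Y (q j : nat) : W q := pvar q (inord j).
Definition dX (q : nat) : W q := dvar q ord0.
Definition dY (q j : nat) : W q := dvar q (inord j).

(* The de Rham differential d : R_q -> Omega(R_q) (on elements of R_q,
   i.e. polynomials in the first q+1 variables). *)
Definition dR (q : nat) (p : W q) : W q :=
  \sum_(v < q.+1) (p^`M(lshift q.+1 v)) * dvar q v.

(* Equality in Omega(R_q): difference lies in the ideal generated by the
   squares (dz)^2 of the d-variables. *)
Definition in_sq_ideal (q : nat) (p : W q) : Prop :=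
  exists g : 'I_q.+1 -> W q, p = \sum_(v < q.+1) g v * dvar q v ^+ 2.

Definition omeq (q : nat) (p p' : W q) : Prop := in_sq_ideal q (p - p').

(* face d_i : R_{q+1} -> R_q (0 <= i <= q+1), on the generator number v
   of R_{q+1} (v = 0 : x, v = j : y_j, 1 <= j <= q+1). *)
Definition faceR_gen (n q i : nat) (v : 'I_q.+2) : W q :=
  let j := nat_of_ord v in
  if j == 0%N then X q
  else if (i < j)%N then
         (if j == 1%N then X q ^+ n.+1 else Y q j.-1)
       else (if (j < q.+1)%N then Y q j else 0).

Definition degR_gen (q i : nat) (v : 'I_q.+1) : W q.+1 :=
  let j := nat_of_ord v in
  if j == 0%N then X q.+1
  else if (i >= j)%N then Y q.+1 j else Y q.+1 j.+1.

(* Functoriality of Omega: an algebra map f : R -> R' induces the algebra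
   map Omega(R) -> Omega(R') with z |-> f z and dz |-> d(f z). *)
Definition Omega_map (q q' : nat) (f : 'I_q.+1 -> W q') (p : W q) : W q' :=
  p \mPo [tuple match split v with
                | inl a => f a
                | inr a => dR q' (f a)
                end | v < q.+1 + q.+1].

Definition face (n q i : nat) (p : W q.+1) : W q :=
  Omega_map q.+1 q (faceR_gen n q i) p.

Definition degen (q i : nat) (p : W q) : W q.+1 :=
  Omega_map q q.+1 (degR_gen q i) p.

(* w is a cycle of the normalized complex N_* Omega(R_bullet):
   w in N_q (d_i w = 0 for 1 <= i <= q) and d_0 w = 0.
   For q = 0, N_0 = Omega(R_0) and the differential N_0 -> 0 is zero. *)
Definition is_cycle (n q : nat) : W q -> Prop :=
  match q return W q -> Prop with
  | 0 => fun _ => True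
  | q'.+1 => fun w =>
      (forall i, (1 <= i <= q'.+1)%N -> omeq q' (face n q' i w) 0)
      /\ omeq q' (face n q' 0 w) 0
  end.

(* w lies in D_{q+1} Omega(R_bullet), the span of the degenerate elements,
   i.e. the sum of the images of s_0, ..., s_q. *)
Definition inD (q : nat) (w : W q.+1) : Prop :=
  exists u : 'I_q.+1 -> W q,
    omeq q.+1 w (\sum_(i < q.+1) degen q i (u i)).

Definition omega (q : nat) : W q := \prod_(1 <= j < q.+1) dY q j.
Definition omega_i (q i : nat) : W q :=
  \prod_(1 <= j < q.+1 | j != i) dY q j.
Definition omega_ij (q i k : nat) : W q :=
  \prod_(1 <= j < q.+1 | (j != i) && (j != k)) dY q j.
Definition alpha (q : nat) : W q := dX q * omega q.
Definition beta (q : nat) : W q :=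
  X q * omega q + dX q * \sum_(1 <= i < q.+1) Y q i * omega_i q i.

(* Main.v *)
Require Import Defs.
From HB Require Import structures.
From mathcomp Require Import all_boot all_order all_algebra.
From mathcomp Require Import mpoly.
From mathcomp Require Import zify ring.
Local Open Scope ring_scope.
Import GRing.Theory.

Lemma sqI0 q : in_sq_ideal q 0.
Proof. exists (fun _ => 0); by rewrite big1 // => v _; rewrite mul0r. Qed.

Lemma sqID q p1 p2 : in_sq_ideal q p1 -> in_sq_ideal q p2 -> in_sq_ideal q (p1 + p2).
Proof.
move=> [g1 ->] [g2 ->]; exists (fun v => g1 v + g2 v).
by rewrite -big_split; apply: eq_bigr => v _; rewrite mulrDl.
Qed.

Lemma sqIM q r p : in_sq_ideal q p -> in_sq_ideal q (r * p).
Proof.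
move=> [g ->]; exists (fun v => r * g v).
by rewrite mulr_sumr; apply: eq_bigr => v _; rewrite mulrA.
Qed.

Lemma sqIMr q r p : in_sq_ideal q p -> in_sq_ideal q (p * r).
Proof. by rewrite mulrC; apply: sqIM. Qed.

Lemma sqIsq q r v : in_sq_ideal q (r * dvar q v ^+ 2).
Proof.
exists (fun w => if w == v then r else 0).
rewrite (bigD1 v) //= eqxx big1 ?addr0 // => w /negPf ->; by rewrite mul0r.
Qed.

Lemma sqIsum q (I : Type) (s : seq I) (P : pred I) (F : I -> W q) :
  (forall i, P i -> in_sq_ideal q (F i)) -> in_sq_ideal q (\sum_(i <- s | P i) F i).
Proof.
move=> H; elim: s => [|a s IH]; first by rewrite big_nil; apply: sqI0.
rewrite big_cons; case: ifP => Pa //; exact: sqID (H _ Pa) IH.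
Qed.

Lemma sqIeq q p p' : p = p' -> in_sq_ideal q p' -> in_sq_ideal q p.
Proof. by move=> ->. Qed.

Lemma F2_2 : (2%:R : 'F_2) = 0.
Proof. by apply/eqP. Qed.

Lemma addxx q (x : W q) : x + x = 0.
Proof. by rewrite -mulr2n -scaler_nat F2_2 scale0r. Qed.

Lemma mulrn_odd q (x : W q) k : x *+ k = x *+ odd k.
Proof.
elim: k => [//|k IH]; rewrite mulrS IH /=; case: (odd k) => /=.
  by rewrite addxx. by rewrite addr0.
Qed.

Lemma Omega_mapM q q' f a b : Omega_map q q' f (a * b) = Omega_map q q' f a * Omega_map q q' f b.
Proof. by rewrite /Omega_map rmorphM. Qed.
Lemma Omega_mapD q q' f a b : Omega_map q q' f (a + b) = Omega_map q q' f a + Omega_map q q' f b.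
Proof. by rewrite /Omega_map rmorphD. Qed.
Lemma Omega_map0 q q' f : Omega_map q q' f 0 = 0.
Proof. by rewrite /Omega_map rmorph0. Qed.
Lemma Omega_map_prod q q' f (I : Type) (s : seq I) (P : pred I) (F : I -> W q) :
  Omega_map q q' f (\prod_(i <- s | P i) F i) = \prod_(i <- s | P i) Omega_map q q' f (F i).
Proof. by rewrite /Omega_map rmorph_prod. Qed.
Lemma Omega_map_sum q q' f (I : Type) (s : seq I) (P : pred I) (F : I -> W q) :
  Omega_map q q' f (\sum_(i <- s | P i) F i) = \sum_(i <- s | P i) Omega_map q q' f (F i).
Proof. by rewrite /Omega_map rmorph_sum. Qed.

Lemma Omega_map_pvar q q' f v : Omega_map q q' f (pvar q v) = f v.
Proof.
rewrite /Omega_map /pvar comp_mpolyXU -tnth_nth tnth_mktuple.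
by have -> : split (lshift q.+1 v) = inl v := unsplitK (inl v).
Qed.

Lemma Omega_map_dvar q q' f v : Omega_map q q' f (dvar q v) = dR q' (f v).
Proof.
rewrite /Omega_map /dvar comp_mpolyXU -tnth_nth tnth_mktuple.
by have -> : split (rshift q.+1 v) = inr v := unsplitK (inr v).
Qed.

Lemma dR_pvar q v : dR q (pvar q v) = dvar q v.
Proof.
rewrite /dR (bigD1 v) //= big1 ?addr0.
  rewrite /pvar mderivX mnm1E eqxx.
  have -> : (U_(lshift q.+1 v) - U_(lshift q.+1 v))%MM = 0%MM.
    by apply/mnmP => k; rewrite !mnmE subnn.
  by rewrite mpolyX0 scale1r mul1r.
move=> w wv; rewrite /pvar mderivX mnm1E.
have -> : (lshift q.+1 v == lshift q.+1 w) = false.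
  by apply/negP => /eqP /lshift_inj E; move: wv; rewrite E eqxx.
by rewrite scale0r mul0r.
Qed.

Lemma dR0 q : dR q 0 = 0.
Proof. by rewrite /dR big1 // => v _; rewrite mderiv0 mul0r. Qed.

Lemma dRM q a b : dR q (a * b) = dR q a * b + a * dR q b.
Proof.
rewrite /dR mulr_sumr mulr_suml -big_split; apply: eq_bigr => v _.
rewrite mderivM mulrDl; congr (_ + _); [exact: mulrAC | exact: esym (mulrA _ _ _)].
Qed.

Lemma dRX q a k : dR q (a ^+ k.+1) = (a ^+ k * dR q a) *+ k.+1.
Proof.
elim: k => [|k IH]; first by rewrite expr1 expr0 mul1r.
rewrite exprS dRM IH mulrnAr.
have E : a * (a ^+ k * dR q a) = a ^+ k.+1 * dR q a by rewrite mulrA -exprS.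
by rewrite E [dR q a * _]mulrC -mulrS.
Qed.

Lemma dR_X q : dR q (X q) = dX q.
Proof. exact: dR_pvar. Qed.
Lemma dR_Y q j : dR q (Y q j) = dY q j.
Proof. exact: dR_pvar. Qed.

Definition fY n m i j : W m :=
  if (i < j)%N then (if j == 1%N then X m ^+ n.+1 else Y m j.-1)
  else if (j < m.+1)%N then Y m j else 0.

Lemma face_X n m i : face n m i (X m.+1) = X m.
Proof. by rewrite /face /X Omega_map_pvar. Qed.
Lemma face_dX n m i : face n m i (dX m.+1) = dX m.
Proof. by rewrite /face /dX Omega_map_dvar /faceR_gen /= dR_X. Qed.
Lemma face_Y n m i j : (1 <= j <= m.+1)%N -> face n m i (Y m.+1 j) = fY n m i j.
Proof.
move=> /andP [j1 jm]; rewrite /face /Y Omega_map_pvar /faceR_gen inordK; last by lia.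
by have -> : (j == 0%N) = false by lia.
Qed.
Lemma face_dY n m i j : (1 <= j <= m.+1)%N -> face n m i (dY m.+1 j) = dR m (fY n m i j).
Proof.
move=> /andP [j1 jm]; rewrite /face /dY Omega_map_dvar /faceR_gen inordK; last by lia.
by have -> : (j == 0%N) = false by lia.
Qed.

Definition sh (i j : nat) := if (j <= i)%N then j else j.+1.

Lemma degen_X q i : degen q i (X q) = X q.+1.
Proof. by rewrite /degen /X Omega_map_pvar. Qed.
Lemma degen_Y q i j : (1 <= j <= q)%N -> degen q i (Y q j) = Y q.+1 (sh i j).
Proof.
move=> /andP [j1 jm]; rewrite /degen /Y Omega_map_pvar /degR_gen inordK; last by lia.
have -> : (j == 0%N) = false by lia.
by rewrite /sh; case: ifP.
Qed.
Lemma degen_dY q i j : (1 <= j <= q)%N -> degen q i (dY q j) = dY q.+1 (sh i j).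
Proof.
move=> /andP [j1 jm]; rewrite /degen /dY Omega_map_dvar /degR_gen inordK; last by lia.
have -> : (j == 0%N) = false by lia.
by rewrite /sh; case: ifP => _; rewrite dR_Y.
Qed.

Lemma inD_of q i0 pre w : (i0 <= q)%N -> degen q i0 pre = w -> inD q w.
Proof.
move=> iq E; exists (fun i : 'I_q.+1 => if val i == i0 then pre else 0).
rewrite (bigD1 (inord i0)) //= inordK // eqxx big1 ?addr0.
  by rewrite E /omeq subrr; apply: sqI0.
move=> j /eqP jn; case: eqP => [ji|_]; last by rewrite /degen Omega_map0.
by exfalso; apply: jn; apply: val_inj; rewrite /= inordK.
Qed.

Lemma degen_prod q i (P : pred nat) : (i <= q)%N ->
  degen q i (\prod_(1 <= m < q.+1 | P m) dY q m) =
  \prod_(1 <= j < q.+2 | (j != i.+1) && P (if (j <= i)%N then j else j.-1)) dY q.+1 j.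
Proof.
move=> iq; rewrite /degen Omega_map_prod.
transitivity (\prod_(1 <= m < q.+1 | P m) dY q.+1 (sh i m)).
  rewrite big_nat_cond [RHS]big_nat_cond; apply: eq_bigr => m /andP[/andP[? ?] _].
  by apply: degen_dY; lia.
have h1 : (1 <= i.+1)%N by [].
have h2 : (i.+1 <= q.+1)%N by lia.
have h3 : (i.+1 <= q.+2)%N by lia.
have h4 : (i.+1 < q.+2)%N by lia.
rewrite (big_cat_nat h1 h2) [RHS](big_cat_nat h1 h3).
rewrite [X in _ = _ * X](big_ltn_cond h4).
rewrite eqxx /=.
congr (_ * _).
  rewrite big_nat_cond [RHS]big_nat_cond; apply: eq_big => m.
    case: (boolP (1 <= m < i.+1)%N) => //= H.
    have -> : (m != i.+1) by lia.
    by have -> : (m <= i)%N by lia.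
  move=> /andP[H _]; rewrite /sh; have -> : (m <= i)%N by lia. by [].
rewrite -{1}[i.+2]addn1 big_addn subn1 /=.
rewrite big_nat_cond [RHS]big_nat_cond; apply: eq_big => m.
  case: (boolP (i.+1 <= m < q.+1)%N) => //= H.
  have -> : (m + 1 != i.+1) by lia.
  have -> : (m + 1 <= i)%N = false by lia.
  by rewrite addn1.
move=> /andP[H _]; rewrite /sh; have -> : (m <= i)%N = false by lia.
by rewrite addn1.
Qed.

Lemma degenM q i a b : degen q i (a * b) = degen q i a * degen q i b.
Proof. exact: Omega_mapM. Qed.

Lemma D1 q r : (1 <= r <= q.+1)%N -> inD q (omega_i q.+1 r).
Proof.
move=> Hr; apply: (inD_of _ (r.-1) (omega q)); first by lia.
rewrite /omega (degen_prod _ _ xpredT); last by lia.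
by apply: eq_bigl => t /=; rewrite andbT; congr (~~ _); apply/eqP/eqP; lia.
Qed.

Lemma D2 q j k : (1 <= j)%N -> (j < k)%N -> (k <= q.+1)%N -> inD q (omega_ij q.+1 j k).
Proof.
move=> H1 H2 H3; apply: (inD_of _ (j.-1) (omega_i q k.-1)); first by lia.
rewrite /omega_i (degen_prod _ _ (fun t => t != k.-1)); last by lia.
apply: eq_bigl => t /=; case: ifP => Ht.
  have -> : (t != j.-1.+1) = (t != j) by apply/idP/idP; lia.
  by apply/idP/idP; lia.
by apply/idP/idP; lia.
Qed.

Lemma D3 q r j k : (1 <= r <= q.+1)%N -> (1 <= j)%N -> (j < k)%N ->
        (k <= q.+1)%N -> inD q (Y q.+1 r * omega_ij q.+1 j k).
Proof.
move=> Hr H1 H2 H3.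
case: (ltngtP r j) => Hrj.
- apply: (inD_of _ (j.-1) (Y q r * omega_i q k.-1)); first by lia.
  rewrite degenM degen_Y; last by lia.
  rewrite /sh; have -> : (r <= j.-1)%N by lia.
  congr (_ * _).
  rewrite /omega_i (degen_prod _ _ (fun t => t != k.-1)); last by lia.
  apply: eq_bigl => t /=; case: ifP => Ht; by apply/idP/idP; lia.
- apply: (inD_of _ (j.-1) (Y q r.-1 * omega_i q k.-1)); first by lia.
  rewrite degenM degen_Y; last by lia.
  rewrite /sh; have -> : (r.-1 <= j.-1)%N = false by lia.
  have -> : r.-1.+1 = r by lia.
  congr (_ * _).
  rewrite /omega_i (degen_prod _ _ (fun t => t != k.-1)); last by lia.
  apply: eq_bigl => t /=; case: ifP => Ht; by apply/idP/idP; lia.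
- subst r.
  apply: (inD_of _ (k.-1) (Y q j * omega_i q j)); first by lia.
  rewrite degenM degen_Y; last by lia.
  rewrite /sh; have -> : (j <= k.-1)%N by lia.
  congr (_ * _).
  rewrite /omega_i (degen_prod _ _ (fun t => t != j)); last by lia.
  apply: eq_bigl => t /=; case: ifP => Ht; by apply/idP/idP; lia.
Qed.

Section Prods.
Variable m : nat.
Implicit Types (r : seq nat) (F : nat -> W m).

Lemma prod_rem r (a : nat) (P : pred nat) F : a \in r -> P a ->
  \prod_(j <- r | P j) F j = F a * \prod_(j <- rem a r | P j) F j.
Proof. by move=> ar Pa; rewrite (big_rem a) // Pa. Qed.
Arguments prod_rem [r a P F].

Lemma prod_zero r (a : nat) (P : pred nat) F : a \in r -> P a -> F a = 0 ->
  \prod_(j <- r | P j) F j = 0.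
Proof. by move=> ar Pa Fa; rewrite (prod_rem ar Pa) Fa mul0r. Qed.

Lemma prod_sq r (a b : nat) (P : pred nat) F v : uniq r -> a != b -> a \in r -> b \in r ->
  P a -> P b -> F a = dvar m v -> F b = dvar m v ->
  in_sq_ideal m (\prod_(j <- r | P j) F j).
Proof.
move=> ur ab ar br Pa Pb Fa Fb.
rewrite (prod_rem ar Pa) (prod_rem (a := b)) //; last first.
  by rewrite (mem_rem_uniq _ ur) inE eq_sym ab br.
apply: (sqIeq _ _ ((\prod_(j <- rem b (rem a r) | P j) F j) * dvar m v ^+ 2)).
  by rewrite Fa Fb mulrA -expr2 mulrC.
exact: sqIsq.
Qed.

Lemma filter_in r (P : pred nat) F : {in r, forall j, P j} ->
  \prod_(j <- r | P j) F j = \prod_(j <- r) F j.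
Proof.
move=> H; rewrite big_seq_cond [RHS]big_seq_cond; apply: eq_bigl => j.
by case: (boolP (j \in r)) => //= /H ->.
Qed.

Lemma prod_swap r (a b : nat) F : uniq r -> a != b -> a \in r -> b \in r -> F a = F b ->
  \prod_(j <- r | j != a) F j = \prod_(j <- r | j != b) F j.
Proof.
move=> ur ab ar br Fab.
rewrite (prod_rem (a := b)) //; last by rewrite eq_sym.
rewrite [RHS](prod_rem (a := a)) // Fab; congr (_ * _).
rewrite !rem_filter // !big_filter_cond; apply: eq_bigl => j /=.
by case: (j == a); case: (j == b).
Qed.
End Prods.

Definition E n m i j : W m := dR m (fY n m i j).

Lemma face_prod n m i (P : pred nat) :
  face n m i (\prod_(1 <= j < m.+2 | P j) dY m.+1 j) = \prod_(1 <= j < m.+2 | P j) E n m i j.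
Proof.
rewrite /face Omega_map_prod big_nat_cond [RHS]big_nat_cond.
by apply: eq_bigr => j /andP [H _]; apply: face_dY.
Qed.

Lemma face_omega n m i : face n m i (omega m.+1) = \prod_(1 <= j < m.+2) E n m i j.
Proof. exact: (face_prod _ _ _ xpredT). Qed.

Lemma face_alpha n m i : face n m i (alpha m.+1) = dX m * \prod_(1 <= j < m.+2) E n m i j.
Proof. by rewrite /alpha /face Omega_mapM -!/(face n m i _) face_dX face_omega. Qed.

Lemma face_beta n m i : face n m i (beta m.+1) =
  X m * \prod_(1 <= j < m.+2) E n m i j +
  dX m * \sum_(1 <= k < m.+2) fY n m i k * \prod_(1 <= j < m.+2 | j != k) E n m i j.
Proof.
rewrite /beta /face Omega_mapD !Omega_mapM -!/(face n m i _) face_dX face_X face_omega.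
congr (_ + _ * _).
rewrite /face Omega_map_sum -/(face n m i _) big_nat_cond [RHS]big_nat_cond.
apply: eq_bigr => k /andP [H _]; rewrite /face Omega_mapM -!/(face n m i _) face_Y //.
by rewrite /omega_i face_prod.
Qed.

Lemma uniq_r m : uniq (index_iota 1 m). Proof. exact: iota_uniq. Qed.

Lemma E_le n m i j : (1 <= j <= i)%N -> (j < m.+1)%N -> E n m i j = dY m j.
Proof. move=> H1 H2; rewrite /E /fY; have -> : (i < j)%N = false by lia.
by rewrite H2 dR_Y. Qed.
Lemma E_gt n m i j : (1 <= i)%N -> (i < j)%N -> E n m i j = dY m j.-1.
Proof. move=> H1 H2; rewrite /E /fY H2; have -> : (j == 1%N) = false by lia.
by rewrite dR_Y. Qed.
Lemma E_top n m : E n m m.+1 m.+1 = 0.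
Proof. rewrite /E /fY. have -> : (m.+1 < m.+1)%N = false by lia. by rewrite dR0. Qed.
Lemma E01 n m : E n m 0 1 = (X m ^+ n * dX m) *+ n.+1.
Proof. by rewrite /E /fY /= dRX dR_X. Qed.

Lemma omeq0 m p : in_sq_ideal m p -> omeq m p 0.
Proof. by rewrite /omeq subr0. Qed.

Lemma mem_r a m : (1 <= a < m)%N -> a \in index_iota 1 m.
Proof. by rewrite mem_index_iota. Qed.

Lemma face_mid n m i (P : pred nat) : (1 <= i)%N -> (i < m.+1)%N -> P i -> P i.+1 ->
  in_sq_ideal m (\prod_(1 <= j < m.+2 | P j) E n m i j).
Proof.
move=> H1 H2 Pi Pi1.
apply: (prod_sq _ _ i i.+1 _ _ (inord i) (uniq_r _)) => //.
- by rewrite neq_ltn ltnSn.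
- by apply: mem_r; lia.
- by apply: mem_r; lia.
- by rewrite E_le //; lia.
- by rewrite E_gt.
Qed.

Lemma face_top n m (P : pred nat) : P m.+1 ->
  \prod_(1 <= j < m.+2 | P j) E n m m.+1 j = 0.
Proof.
move=> Pm; apply: (prod_zero _ _ m.+1) => //; first by apply: mem_r; lia.
exact: E_top.
Qed.

Lemma E01_odd n m : odd n -> E n m 0 1 = 0.
Proof. by move=> on; rewrite E01 mulrn_odd /= on. Qed.
Lemma E01_even n m : ~~ odd n -> E n m 0 1 = X m ^+ n * dX m.
Proof. by move=> on; rewrite E01 mulrn_odd /= (negPf on). Qed.

Lemma cyc_omega n m : odd n -> is_cycle n m.+1 (omega m.+1).
Proof.
move=> on; split.
  move=> i Hi; apply: omeq0; rewrite face_omega.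
  case: (ltnP i m.+1) => Him; first by apply: face_mid; lia.
  have -> : i = m.+1 by lia.
  by rewrite face_top //; apply: sqI0.
have h : 1%N \in index_iota 1 m.+2 by apply: mem_r.
apply: omeq0; rewrite face_omega (prod_zero _ _ _ _ _ h isT (E01_odd _ _ on)).
exact: sqI0.
Qed.

Lemma cyc_alpha n m : ~~ odd n -> is_cycle n m.+1 (alpha m.+1).
Proof.
move=> on; split.
  move=> i Hi; apply: omeq0; rewrite face_alpha; apply: sqIM.
  case: (ltnP i m.+1) => Him; first by apply: face_mid; lia.
  have -> : i = m.+1 by lia.
  by rewrite face_top //; apply: sqI0.
have h : 1%N \in index_iota 1 m.+2 by apply: mem_r.
apply: omeq0; rewrite face_alpha (prod_rem _ _ _ _ _ h isT).
rewrite E01_even //.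
apply: (sqIeq _ _ ((X m ^+ n * \prod_(j <- rem 1%N (index_iota 1 m.+2)) E n m 0 j) * dvar m ord0 ^+ 2)).
  rewrite /dX /dvar; ring.
exact: sqIsq.
Qed.

Lemma cyc_beta n m : ~~ odd n -> is_cycle n m.+1 (beta m.+1).
Proof.
move=> on; have ur := uniq_r m.+2; split.
  move=> i Hi; apply: omeq0; rewrite face_beta.
  case: (ltnP i m.+1) => Him.
    apply: sqID; first by apply: sqIM; apply: (face_mid _ _ _ xpredT); lia.
    apply: sqIM.
    have hi1 : i.+1 \in index_iota 1 m.+2 by apply: mem_r; lia.
    have hi : i \in rem i.+1 (index_iota 1 m.+2).
      by rewrite (mem_rem_uniq _ ur) inE; apply/andP; split; [rewrite neq_ltn ltnSn | apply: mem_r; lia].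
    rewrite (big_rem _ hi1) /= (big_rem _ hi) /=.
    have -> : fY n m i i.+1 = Y m i.
      by rewrite /fY ltnSn; have -> : (i.+1 == 1%N) = false by lia.
    have -> : fY n m i i = Y m i.
      by rewrite /fY ltnn Him.
    have hir : i \in index_iota 1 m.+2 by apply: mem_r; lia.
    have hne : i.+1 != i by rewrite neq_ltn ltnSn orbT.
    have hE : E n m i i.+1 = E n m i i.
      rewrite E_gt //; last by lia. rewrite E_le //; lia.
    rewrite (prod_swap _ _ i.+1 i _ ur hne hi1 hir hE).
    rewrite addrA addxx add0r big_seq; apply: sqIsum => k kin.
    move: kin; rewrite (mem_rem_uniq _ (rem_uniq _ ur)) inE => /andP [ki].
    rewrite (mem_rem_uniq _ ur) inE => /andP [ki1 kr].
    apply: sqIM; apply: (face_mid _ _ _ (fun j => j != k)) => //; lia.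
  have -> : i = m.+1 by lia.
  rewrite face_top // mulr0 add0r big1_seq ?mulr0; first by apply: sqI0.
  move=> k /andP [_ kr]; case: (eqVneq k m.+1) => [->|km].
    rewrite /fY; have -> : (m.+1 < m.+1)%N = false by lia.
    by rewrite mul0r.
  by rewrite face_top ?mulr0 // eq_sym.
have h : 1%N \in index_iota 1 m.+2 by apply: mem_r.
apply: omeq0; rewrite face_beta (prod_rem _ _ _ _ _ h isT) E01_even //.
rewrite (big_rem _ h) /=.
have -> : fY n m 0 1 = X m ^+ n.+1 by [].
rewrite (big_rem _ h) /= mul1r.
set R := \prod_(j <- iota 2 m) E n m 0 j.
have -> : \prod_(y <- iota 2 m | y != 1%N) E n m 0 y = R.
  by rewrite filter_in // => j; rewrite mem_iota; lia.
set Z := \sum_(k <- _ | _) _.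
have -> : X m * (X m ^+ n * dX m * R) + dX m * (X m ^+ n.+1 * R + Z)
   = (X m ^+ n.+1 * dX m * R + X m ^+ n.+1 * dX m * R) + dX m * Z.
  rewrite exprS; ring.
rewrite addxx add0r /Z mulr_sumr big_seq; apply: sqIsum => k.
rewrite mem_iota => kr.
have hk : 1%N != k by lia.
rewrite (prod_rem _ _ _ _ _ h hk) E01_even //.
set R' := \prod_(j <- _ | _) _.
apply: (sqIeq _ _ ((fY n m 0 k * X m ^+ n * R') * dvar m ord0 ^+ 2)).
  rewrite /dX /dvar; ring.
exact: sqIsq.
Qed.

Theorem lemma2p3 (n : nat) (hn : (1 <= n)%N) (q : nat) :
  (odd n -> is_cycle n q (omega q))
  /\ (~~ odd n -> is_cycle n q (alpha q) /\ is_cycle n q (beta q))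
  /\ (forall r : nat, (1 <= r <= q.+1)%N -> inD q (omega_i q.+1 r))
  /\ (forall j k : nat, (1 <= j)%N -> (j < k)%N -> (k <= q.+1)%N ->
        inD q (omega_ij q.+1 j k))
  /\ (forall r j k : nat, (1 <= r <= q.+1)%N -> (1 <= j)%N -> (j < k)%N ->
        (k <= q.+1)%N -> inD q (Y q.+1 r * omega_ij q.+1 j k)).
Proof.
split; last split; last split; last split.
- by case: q => [//|m]; apply: cyc_omega.
- by case: q => [//|m] on; split; [apply: cyc_alpha | apply: cyc_beta].
- exact: D1.
- exact: D2.
- exact: D3.
Qed.
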